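(* Let $0<d<\pi/2$, let $c_d=1+1/\cos(\frac\pi2\sin d)$ and $\tilde c_d=\frac{1+\log(1+c_d)}{\log(1+c_d)}c_d$. Then \[ \sup_{|\Im\zeta|\le d}\left|\frac{1+\log(1+e^{\pi\sinh\zeta})}{\log(1+e^{\pi\sinh\zeta})}\cdot\frac{1}{1+e^{-\pi\sinh\zeta}}\right|\le\tilde c_d, \] \[ \sup_{x\in\mathbb{R}}\left\{\frac{1+\log(1+e^{\pi\sinh x})}{\log(1+e^{\pi\sinh x})}\cdot\frac{1}{1+e^{-\pi\sinh x}}\right\}\le e^{\pi/12}. \]
   Context: $\log$ denotes the principal branch of the complex logarithm. *)

(* Defs.v *)
From Stdlib Require Import Reals.
From Coquelicot Require Import Coquelicot.
Open Scope R_scope.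

Definition Cexp (z : C) : C :=
  (exp (fst z) * cos (snd z), exp (fst z) * sin (snd z)).

(* principal argument, with values in (-pi, pi]  (Carg 0 = 0, irrelevant) *)
Definition Carg (z : C) : R :=
  if Rle_dec 0 (snd z) then acos (fst z / Cmod z) else - acos (fst z / Cmod z).

Definition Clog (z : C) : C := (ln (Cmod z), Carg z).

Definition Csinh (z : C) : C := ((Cexp z - Cexp (- z)) / 2)%C.

Definition c_d (d : R) : R := 1 + 1 / cos (PI / 2 * sin d).
Definition ct_d (d : R) : R :=
  (1 + ln (1 + c_d d)) / ln (1 + c_d d) * c_d d.

Definition Fc (z : C) : C :=
  let w := (RtoC PI * Csinh z)%C in
  ((1 + Clog (1 + Cexp w)) / Clog (1 + Cexp w) * (1 / (1 + Cexp (- w))))%C.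

Definition Fr (x : R) : R :=
  let w := PI * sinh x in
  (1 + ln (1 + exp w)) / ln (1 + exp w) * (1 / (1 + exp (- w))).

(* Main.v *)
Require Import Defs.
From Stdlib Require Import Reals.
From Coquelicot Require Import Coquelicot.
From Stdlib Require Import Lra Psatz Machin.
Open Scope R_scope.

Lemma exp_ineq_main t rho : Rabs t <= rho ->
  (exp t - 1)^2 + exp t * (rho^2 - t^2) <= (exp rho - 1)^2.
Proof.
intros H.
assert (Hr : 0 <= rho) by (pose proof (Rabs_pos t); lra).
pose proof (exp_ineq1_le rho) as E1.
destruct (Rle_lt_dec 0 t) as [Ht|Ht].
- rewrite Rabs_right in H by lra.
  assert (EB : exp rho = exp t * exp (rho - t)) by (rewrite <- exp_plus; f_equal; ring).
  pose proof (exp_ineq1_le (rho - t)). pose proof (exp_ineq1_le t).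
  pose proof (exp_pos t).
  assert (exp rho - exp t >= exp t * (rho - t)) by nra.
  assert (exp rho + exp t - 2 >= rho + t) by lra.
  assert ((exp rho - exp t) * (exp rho + exp t - 2) >= exp t * (rho - t) * (rho + t)).
  { apply Rle_ge. apply Rle_trans with (exp t * (rho - t) * (exp rho + exp t - 2)).
    apply Rmult_le_compat_l; nra. apply Rmult_le_compat_r; nra. }
  nra.
- rewrite Rabs_left in H by lra.
  set (s := -t). assert (Hst : s = -t) by reflexivity. assert (Hs : 0 < s) by lra.
  assert (EA : exp t * exp s = 1) by (unfold s; rewrite <- exp_plus; replace (t + - t) with 0 by ring; apply exp_0).
  assert (EB : exp rho = exp s * exp (rho - s)) by (rewrite <- exp_plus; f_equal; ring).
  pose proof (exp_ineq1_le (rho - s)). pose proof (exp_ineq1_le s).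
  pose proof (exp_pos t). pose proof (exp_pos s).
  assert (HA1 : exp t < 1).
  { rewrite <- exp_0. apply exp_increasing. lra. }
  assert (exp rho >= exp s * (1 + (rho - s))) by (rewrite EB; apply Rle_ge, Rmult_le_compat_l; lra).
  assert (0 <= (exp s - 1) * (rho - s)) by (apply Rmult_le_pos; lra).
  assert (exp rho - exp s >= rho - s) by nra.
  assert (exp rho + exp s - 2 >= rho + s) by lra.
  assert ((exp rho - exp s) * (exp rho + exp s - 2) >= (rho - s) * (rho + s)).
  { apply Rle_ge. apply Rle_trans with ((rho - s) * (exp rho + exp s - 2)).
    apply Rmult_le_compat_l; lra. apply Rmult_le_compat_r; lra. }
  assert (exp s + exp t >= 2) by nra.
  assert (exp s >= exp t) by lra.
  assert (t^2 = s^2) by (rewrite Hst; ring).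
  assert (0 <= (exp s - exp t) * (exp s + exp t - 2)) by (apply Rmult_le_pos; lra).
  assert (0 <= (1 - exp t) * (rho^2 - s^2)) by (apply Rmult_le_pos; nra).
  nra.
Qed.

Lemma cos_lb phi : 0 <= phi <= PI -> 1 - phi^2/2 <= cos phi.
Proof.
intros H.
replace phi with (2 * (phi/2)) at 2 by field.
rewrite cos_2a_sin.
assert (0 <= sin (phi/2)) by (apply sin_ge_0; lra).
assert (sin (phi/2) <= phi/2).
{ destruct (Req_dec phi 0). subst. replace (0/2) with 0 by field. rewrite sin_0; lra.
  apply Rlt_le, sin_lt_x; lra. }
nra.
Qed.

Lemma ln_le' x y : 0 < x -> x <= y -> ln x <= ln y.
Proof. intros. destruct (Req_dec x y). subst; lra. apply Rlt_le, ln_increasing; lra. Qed.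

Lemma L2 a r X phi : 0 < r -> 0 <= phi <= PI -> cos phi = X / r ->
  exp a ^ 2 = r^2 - 2*X + 1 ->
  ln (1 + exp a / r) <= sqrt (ln r ^ 2 + phi ^ 2).
Proof.
intros Hr Hphi Hc He.
set (t := - ln r).
assert (Et : exp t = / r) by (unfold t; rewrite exp_Ropp, exp_ln; lra).
set (rho := sqrt (ln r ^ 2 + phi ^ 2)).
assert (Hrho2 : rho ^ 2 = t^2 + phi^2).
{ unfold rho. rewrite <- Rsqr_pow2, Rsqr_sqrt. unfold t; ring. nra. }
assert (Hrho0 : 0 <= rho) by apply sqrt_pos.
assert (Hat : Rabs t <= rho).
{ rewrite <- sqrt_Rsqr_abs. unfold rho. apply sqrt_le_1_alt. unfold t, Rsqr. nra. }
pose proof (exp_ineq_main t rho Hat) as Hm.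
rewrite Hrho2, Et in Hm.
pose proof (cos_lb phi Hphi).
set (V := exp a / r).
assert (HV0 : 0 <= V) by (unfold V; apply Rlt_le, Rdiv_lt_0_compat; [apply exp_pos|lra]).
assert (HX : X = r * cos phi) by (rewrite Hc; field; lra).
assert (HV2 : V^2 = 1 - 2 * (/r) * cos phi + (/r)^2).
{ unfold V. replace ((exp a / r)^2) with (exp a ^2 / r^2) by (field; lra). rewrite He, HX. field. lra. }
assert (Hir : 0 < / r) by (apply Rinv_0_lt_compat; lra).
assert (V^2 <= (exp rho - 1)^2).
{ rewrite HV2. eapply Rle_trans; [|exact Hm]. nra. }
pose proof (exp_ineq1_le rho).
assert (V <= exp rho - 1) by nra.
rewrite <- (ln_exp rho). apply ln_le'; lra.
Qed.

Lemma mono V c : 0 < V <= c -> V + V / ln (1+V) <= c + c / ln (1+c).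
Proof.
intros [H0 H1].
set (L := ln (1+c)).
assert (HL : 0 < L) by (unfold L; rewrite <- ln_1; apply ln_increasing; lra).
set (lam := V / c).
assert (Hl0 : 0 < lam) by (unfold lam; apply Rdiv_lt_0_compat; lra).
assert (Hl1 : lam <= 1) by (unfold lam; apply (Rmult_le_reg_r c); [lra|]; field_simplify; lra).
assert (EL : exp L = 1 + c) by (unfold L; apply exp_ln; lra).
set (E0 := exp (lam * L)).
assert (HE0 : 0 < E0) by apply exp_pos.
assert (A1 : exp L >= E0 * (1 + (1 - lam) * L)).
{ replace L with (lam * L + (1 - lam) * L) at 1 by ring. rewrite exp_plus.
  pose proof (exp_ineq1_le ((1-lam)*L)). unfold E0. apply Rle_ge, Rmult_le_compat_l; [apply Rlt_le, exp_pos|lra]. }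
assert (A2 : 1 >= E0 * (1 - lam * L)).
{ assert (Einv: E0 * exp (- (lam * L)) = 1) by (unfold E0; rewrite <- exp_plus; replace (lam * L + - (lam * L)) with 0 by ring; apply exp_0).
  pose proof (exp_ineq1_le (- (lam * L))). rewrite <- Einv at 1. apply Rle_ge, Rmult_le_compat_l; lra. }
assert (A3 : E0 <= 1 + V).
{ assert (V = lam * c) by (unfold lam; field; lra). nra. }
assert (A4 : lam * L <= ln (1 + V)).
{ rewrite <- (ln_exp (lam * L)). apply ln_le'; [apply exp_pos|exact A3]. }
assert (HlV : 0 < ln (1 + V)) by (rewrite <- ln_1; apply ln_increasing; lra).
assert (V / ln (1+V) <= c / L).
{ apply (Rmult_le_reg_r (ln (1+V) * L)). nra.
  replace (V / ln (1 + V) * (ln (1 + V) * L)) with (V * L) by (field; lra).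
  replace (c / L * (ln (1 + V) * L)) with (c * ln (1+V)) by (field; lra).
  assert (V * L = c * (lam * L)) by (unfold lam; field; lra).
  nra. }
lra.
Qed.

Lemma alg C S c s p : C^2 - S^2 = 1 -> c^2 + s^2 = 1 -> 0 < C -> 0 <= s -> 1/2 < p <= 1 ->
  p < C*s -> s <= 2*p-1 -> 0 <= S*c -> 1 - p <= S*c.
Proof.
intros HCS Hcs HC Hs Hp HCs Hs2 HSc.
assert (Hspos : 0 < s).
{ destruct (Req_dec s 0) as [e|e]; [|lra]. rewrite e in HCs. lra. }
assert (F1 : (1-p)*(3*p-1) <= p^2 - s^2).
{ assert (s^2 <= (2*p-1)^2) by (apply pow_incr; lra). nra. }
assert (F2 : 4*p*(1-p) <= 1 - s^2).
{ assert (s^2 <= (2*p-1)^2) by (apply pow_incr; lra). nra. }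
assert (F3 : 0 <= (1-p)*(3*p-1)) by (apply Rmult_le_pos; lra).
assert (F4 : 0 <= 4*p*(1-p)) by (apply Rmult_le_pos; lra).
assert (G1 : (1-p)*(3*p-1) * (4*p*(1-p)) <= (p^2 - s^2) * (1 - s^2)).
{ apply Rmult_le_compat; lra. }
assert (G2 : s^2 * (1-p)^2 <= (1-p)*(3*p-1) * (4*p*(1-p))).
{ assert (H1 : (2*p-1)^2 <= 4*p*(3*p-1)) by nra.
  assert (H2 : s^2 <= (2*p-1)^2) by (apply pow_incr; lra).
  assert (H3 : 0 <= (1-p)^2) by (apply pow2_ge_0).
  replace ((1-p)*(3*p-1) * (4*p*(1-p))) with (4*p*(3*p-1) * (1-p)^2) by ring.
  apply Rmult_le_compat_r; lra. }
assert (G3 : (p^2 - s^2) * (1 - s^2) <= (C^2 - 1) * (1 - s^2) * s^2).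
{ assert (H1 : p^2 <= (C*s)^2) by (apply pow_incr; lra).
  replace ((C^2 - 1) * (1 - s^2) * s^2) with (((C*s)^2 - s^2) * (1 - s^2)) by ring.
  apply Rmult_le_compat_r; nra. }
assert (G4 : (S*c)^2 = (C^2 - 1) * (1 - s^2)) by nra.
assert (G5 : (1-p)^2 <= (S*c)^2).
{ apply (Rmult_le_reg_r (s^2)). apply pow_lt; lra. rewrite G4. lra. }
destruct (Rle_lt_dec (1-p) (S*c)); [lra|].
nra.
Qed.

Lemma cosh_sinh x : cosh x ^ 2 - sinh x ^ 2 = 1.
Proof.
unfold cosh, sinh.
assert (exp x * exp (-x) = 1) by (rewrite <- exp_plus; replace (x + -x) with 0 by ring; apply exp_0).
nra.
Qed.
Lemma cosh_pos x : 0 < cosh x.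
Proof. unfold cosh. pose proof (exp_pos x). pose proof (exp_pos (-x)). lra. Qed.

Lemma sin_abs_le d y : 0 < d < PI/2 -> Rabs y <= d -> Rabs (sin y) <= sin d.
Proof.
intros Hd Hy. pose proof PI_RGT_0.
assert (-d <= y <= d) by (revert Hy; unfold Rabs; destruct (Rcase_abs y); intros; lra).
assert (sin y <= sin d) by (apply sin_incr_1; lra).
assert (sin (-d) <= sin y) by (apply sin_incr_1; lra).
rewrite sin_neg in H2.
unfold Rabs; destruct (Rcase_abs (sin y)); lra.
Qed.

Lemma K d x y a b : 0 < d < PI/2 -> Rabs y <= d ->
  a = PI * (sinh x * cos y) -> b = PI * (cosh x * sin y) -> 0 <= a ->
  cos (PI/2 * sin d) ^ 2 <= 1 + 2 * exp a * cos b + exp a ^ 2.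
Proof.
intros Hd Hy Ha Hb Ha0.
pose proof PI_RGT_0 as HPI.
set (th := PI/2 * sin d).
assert (Hsd : 0 < sin d) by (apply sin_gt_0; lra).
pose proof (SIN_bound d) as Hsd1.
assert (Hth : 0 < th <= PI/2) by (unfold th; split; nra).
set (m := cos th).
assert (Hm0 : 0 <= m) by (unfold m; apply cos_ge_0; lra).
assert (Hm1 : m <= 1) by (unfold m; pose proof (COS_bound th); lra).
set (E := exp a).
assert (HE : 1 + a <= E) by (unfold E; apply exp_ineq1_le).
pose proof (COS_bound b) as Hcb.
assert (Hid : 1 + 2 * E * cos b + E^2 = sin b ^ 2 + (E + cos b)^2).
{ pose proof (sin2_cos2 b). unfold Rsqr in H. nra. }
assert (HE0 : 0 <= E) by (unfold E; apply Rlt_le, exp_pos).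
assert (Hm2 : m^2 <= 1) by (clear - Hm0 Hm1; nra).
destruct (Rle_lt_dec 0 (cos b)) as [Hc|Hc].
{ assert (0 <= E * cos b) by (apply Rmult_le_pos; lra). assert (0 <= E^2) by nra. lra. }
set (beta := Rabs b).
assert (Hcbeta : cos beta = cos b) by (unfold beta, Rabs; destruct (Rcase_abs b); [apply cos_neg|reflexivity]).
assert (Hsbeta : sin beta ^ 2 = sin b ^ 2) by (unfold beta, Rabs; destruct (Rcase_abs b); [rewrite sin_neg; ring|reflexivity]).
assert (Hb0 : 0 <= beta) by apply Rabs_pos.
assert (Hbeta1 : PI/2 < beta).
{ destruct (Rle_lt_dec beta (PI/2)); [|lra]. assert (0 <= cos beta) by (apply cos_ge_0; lra). lra. }
destruct (Rle_lt_dec beta (PI/2 + th)) as [Hb2|Hb2].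
- assert (Hs : sin beta = cos (beta - PI/2)).
  { rewrite <- cos_shift. rewrite <- cos_neg. f_equal. ring. }
  assert (m <= sin beta).
  { rewrite Hs. unfold m. destruct (Req_dec (beta - PI/2) th) as [e|e]. rewrite e; lra.
    apply Rlt_le, cos_decreasing_1; lra. }
  assert (m^2 <= sin beta ^2) by (apply pow_incr; lra).
  assert (0 <= (E + cos b)^2) by apply pow2_ge_0.
  lra.
-
  assert (Hmth : m <= PI/2 - th).
  { unfold m. replace (cos th) with (sin (PI/2 - th)) by (rewrite <- cos_shift; f_equal; ring).
    destruct (Req_dec (PI/2 - th) 0) as [e|e]. rewrite e, sin_0; lra.
    apply Rlt_le, sin_lt_x; lra. }
  set (C := cosh x). set (S := sinh x). set (c := cos y). set (s := Rabs (sin y)).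
  assert (HCS : C^2 - S^2 = 1) by apply cosh_sinh.
  assert (HC : 0 < C) by apply cosh_pos.
  assert (Hc0 : 0 < c).
  { unfold c. assert (-d <= y <= d) by (revert Hy; unfold Rabs; destruct (Rcase_abs y); intros; lra).
    apply cos_gt_0; lra. }
  assert (Hcs : c^2 + s^2 = 1).
  { unfold c, s. rewrite pow2_abs. pose proof (sin2_cos2 y). unfold Rsqr in H. nra. }
  assert (Hs0 : 0 <= s) by apply Rabs_pos.
  assert (Hsd2 : s <= sin d) by (apply sin_abs_le; lra).
  assert (Hbeta : beta = PI * (C * s)).
  { unfold beta, s, C. rewrite Hb, !Rabs_mult, (Rabs_right PI), (Rabs_right (cosh x)); try lra.
    left; apply cosh_pos. }
  set (u := sin d / 2).
  set (p := 1/2 + u).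
  assert (Hp1 : 1/2 < p <= 1) by (unfold p, u; lra).
  assert (HCs : p < C * s).
  { apply (Rmult_lt_reg_l PI); [lra|]. rewrite <- Hbeta. unfold p, u. unfold th in Hb2. lra. }
  assert (Hs2 : s <= 2*p - 1) by (unfold p, u; lra).
  assert (HSc0 : 0 <= S * c).
  { apply (Rmult_le_reg_l PI); [lra|]. rewrite Rmult_0_r. unfold S, c. lra. }
  assert (G6 := alg C S c s p HCS Hcs HC Hs0 Hp1 HCs Hs2 HSc0).
  assert (Ham : m <= a).
  { rewrite Ha. fold S c. unfold th in Hmth. unfold p, u in G6.
    assert (PI * (1/2 - sin d / 2) <= PI * (S * c)) by (apply Rmult_le_compat_l; lra).
    lra. }
  assert (E - 1 >= m) by lra.
  assert (m^2 <= (E-1)^2) by (apply pow_incr; lra).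
  assert (0 <= E) by (unfold E; apply Rlt_le, exp_pos).
  assert (2 * E * cos b >= - 2 * E) by nra.
  nra.
Qed.


Lemma sinh_neg x : sinh (-x) = - sinh x.
Proof. unfold sinh. rewrite Ropp_involutive. field. Qed.
Lemma cosh_neg x : cosh (-x) = cosh x.
Proof. unfold cosh. rewrite Ropp_involutive. field. Qed.

Lemma Vbound d x y a b : 0 < d < PI/2 -> Rabs y <= d ->
  a = PI * (sinh x * cos y) -> b = PI * (cosh x * sin y) ->
  0 < sqrt ((1 + exp a * cos b)^2 + (exp a * sin b)^2) /\
  exp a / sqrt ((1 + exp a * cos b)^2 + (exp a * sin b)^2) <= 1 + 1 / cos (PI/2 * sin d).
Proof.
intros Hd Hy Ha Hb.
pose proof PI_RGT_0 as HPI.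
set (m := cos (PI/2 * sin d)).
assert (Hsd : 0 < sin d) by (apply sin_gt_0; lra).
assert (Hsd1 : sin d < 1).
{ rewrite <- sin_PI2. apply sin_increasing_1; lra. }
assert (Hm : 0 < m) by (unfold m; apply cos_gt_0; nra).
set (E := exp a). assert (HE : 0 < E) by apply exp_pos.
set (R2 := (1 + E * cos b)^2 + (E * sin b)^2).
assert (HR2 : R2 = 1 + 2 * E * cos b + E^2).
{ unfold R2. pose proof (sin2_cos2 b). unfold Rsqr in H.
  transitivity (1 + 2*E*cos b + E^2*(sin b * sin b + cos b * cos b)). ring. rewrite H; ring. }
assert (HR20 : 0 <= R2) by (unfold R2; apply Rplus_le_le_0_compat; apply pow2_ge_0).
set (r := sqrt R2).
assert (Hr0 : 0 <= r) by apply sqrt_pos.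
assert (Hrr : r^2 = R2) by (unfold r; rewrite <- Rsqr_pow2; apply Rsqr_sqrt; lra).
assert (Hmr : 1 / m <= 1 + 1 / m) by lra.
destruct (Rle_lt_dec 0 a) as [Ha0|Ha0].
- pose proof (K d x y a b Hd Hy Ha Hb Ha0) as HK. fold m E in HK. rewrite <- HR2, <- Hrr in HK.
  assert (Hmr2 : m <= r) by nra.
  assert (HEr : E^2 <= (r+1)^2).
  { assert (E^2 = R2 - 2 * (1 + E * cos b) + 1) by (rewrite HR2; ring).
    assert ((1 + E * cos b)^2 <= r^2) by (rewrite Hrr; unfold R2; nra).
    assert (- (1 + E*cos b) <= r) by nra. nra. }
  assert (E <= r + 1) by nra.
  split; [lra|].
  apply Rle_trans with (1 + 1/r).
  { apply (Rmult_le_reg_r r); [lra|]. field_simplify; lra. }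
  assert (1/r <= 1/m).
  { unfold Rdiv. rewrite !Rmult_1_l. apply Rinv_le_contravar; lra. }
  lra.
- assert (Ha' : -a = PI * (sinh (-x) * cos (-y))) by (rewrite sinh_neg, cos_neg, Ha; ring).
  assert (Hb' : -b = PI * (cosh (-x) * sin (-y))) by (rewrite cosh_neg, sin_neg, Hb; ring).
  assert (Hy' : Rabs (-y) <= d) by (rewrite Rabs_Ropp; exact Hy).
  pose proof (K d (-x) (-y) (-a) (-b) Hd Hy' Ha' Hb' ltac:(lra)) as HK. fold m in HK.
  rewrite cos_neg in HK.
  set (F := exp (-a)) in HK.
  assert (EF : E * F = 1) by (unfold E, F; rewrite <- exp_plus; replace (a + -a) with 0 by ring; apply exp_0).
  set (R2' := 1 + 2 * F * cos b + F^2) in HK.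
  assert (HRR : R2 = E^2 * R2').
  { rewrite HR2. unfold R2'. replace 1 with (E*F) at 1 by exact EF. replace (1) with ((E*F)^2) at 3 by (rewrite EF; ring). ring_simplify. 
    replace ((E*F)^2) with 1 by (rewrite EF; ring). nra. }
  assert (HR2'0 : 0 <= R2') by nra.
  set (r' := sqrt R2').
  assert (Hr'0 : 0 <= r') by apply sqrt_pos.
  assert (Hrr' : r'^2 = R2') by (unfold r'; rewrite <- Rsqr_pow2; apply Rsqr_sqrt; lra).
  assert (Hmr' : m <= r') by nra.
  assert (Hreq : r = E * r').
  { assert (r^2 = (E*r')^2) by (rewrite Hrr, HRR, <- Hrr'; ring).
    assert (0 <= E * r') by (apply Rmult_le_pos; lra). nra. }
  split. rewrite Hreq; apply Rmult_lt_0_compat; lra.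
  fold E R2 r. rewrite Hreq.
  replace (E / (E * r')) with (1 / r') by (field; lra).
  assert (1/r' <= 1/m).
  { unfold Rdiv. rewrite !Rmult_1_l. apply Rinv_le_contravar; lra. }
  lra.
Qed.

Lemma Dn_exp (s : R) : forall m t, Derive_n (fun t => exp (s*t)) m t = s^m * exp (s*t).
Proof.
induction m; intros t; simpl. ring.
rewrite (Derive_ext _ (fun t => s^m * exp (s*t))) by (intros; apply IHm).
apply is_derive_unique. auto_derive; [easy|ring].
Qed.
Lemma exDn_exp (s : R) : forall m t, ex_derive_n (fun t => exp (s*t)) m t.
Proof.
intros [|m] t; simpl. easy.
apply (ex_derive_ext (fun t => s^m * exp (s*t))). intros; symmetry; apply Dn_exp.
auto_derive; easy.
Qed.
Lemma exp_taylor_lb s n h : 0 < h -> 0 <= s^(S n) ->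
  sum_f_R0 (fun m => h^m / INR (Factorial.fact m) * s^m) n <= exp (s*h).
Proof.
intros Hh Hs.
destruct (Taylor_Lagrange (fun t => exp (s*t)) n 0 h Hh) as [z [Hz E]].
{ intros; apply exDn_exp. }
cbv beta in E. rewrite E.
rewrite !Rminus_0_r.
assert (Hr: 0 <= h ^ S n / INR (Factorial.fact (S n)) * Derive_n (fun t => exp (s * t)) (S n) z).
{ rewrite Dn_exp. apply Rmult_le_pos. apply Rmult_le_pos. apply pow_le; lra.
  apply Rlt_le, Rinv_0_lt_compat, lt_0_INR, Factorial.lt_O_fact.
  apply Rmult_le_pos; [exact Hs| apply Rlt_le, exp_pos]. }
match goal with |- ?A <= ?B + _ => assert (A = B) end.
{ apply sum_eq; intros i _. rewrite Dn_exp, Rmult_0_r, exp_0. ring. }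
lra.
Qed.
Lemma em_lb h : 0 <= h -> 1 - h + h^2/2 - h^3/6 + h^4/24 - h^5/120 <= exp (-h).
Proof.
intros H. destruct (Req_dec h 0). subst; rewrite Ropp_0, exp_0; lra.
replace (-h) with ((-1)*h) by ring.
eapply Rle_trans; [|apply (exp_taylor_lb (-1) 5 h); [lra| simpl; lra]].
simpl. lra.
Qed.
Definition P S := 10609/78400 * (1+S) * (1 + (2-S) + (2-S)^2/2 + (2-S)^3/6) - (1 - 299/1000*S).
Lemma powb t w k : Rabs t <= w -> - w^k <= t^k <= w^k.
Proof. intros H. assert (Rabs (t^k) <= w^k).
{ rewrite <- RPow_abs. apply pow_incr. split; [apply Rabs_pos|exact H]. }
revert H0; unfold Rabs; destruct (Rcase_abs (t^k)); intros; lra. Qed.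
Ltac seg c w := let S := fresh in
  match goal with |- 0 <= P ?S0 =>
  assert (Hb: Rabs (S0 - c) <= w) by (apply Rabs_le; lra);
  pose proof (powb _ _ 1 Hb); pose proof (powb _ _ 2 Hb); pose proof (powb _ _ 3 Hb); pose proof (powb _ _ 4 Hb);
  unfold P; lra end.
Lemma a1 S : 1 <= S <= 3/2 -> 0 <= P S.
Proof. intros. seg (5/4) (1/4). Qed.
Lemma Pall S : 1 <= S <= 7/2 -> 0 <= P S.
Proof. intros H.
destruct (Rle_lt_dec S (3/2)). seg (5/4) (1/4).
destruct (Rle_lt_dec S (13/8)). seg (25/16) (1/16).
destruct (Rle_lt_dec S (7/4)). seg (27/16) (1/16).
destruct (Rle_lt_dec S (15/8)). seg (29/16) (1/16).
destruct (Rle_lt_dec S 2). seg (31/16) (1/16).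
destruct (Rle_lt_dec S (9/4)). seg (17/8) (1/8).
destruct (Rle_lt_dec S (11/4)). seg (5/2) (1/4).
destruct (Rle_lt_dec S (13/4)). seg 3 (1/4).
seg (27/8) (1/8).
Qed.
Lemma PI_lb : 78537/100000 <= PI/4.
Proof.
destruct (PI_2_3_7_ineq 1) as [H _].
eapply Rle_trans; [|exact H].
unfold tg_alt, PI_2_3_7_tg, Ratan_seq. simpl. lra.
Qed.
Lemma e1_lb : 103/280 <= exp (-1).
Proof.
replace (-1) with ((-1)*1) by ring.
eapply Rle_trans; [|apply (exp_taylor_lb (-1) 7 1); [lra| simpl; lra]].
simpl. lra.
Qed.
Lemma T3_lb x : 1 + x + x^2/2 + x^3/6 <= exp x.
Proof.
destruct (Rtotal_order x 0) as [H|[H|H]].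
- replace x with ((-1)*(-x)) by ring.
  eapply Rle_trans; [|apply (exp_taylor_lb (-1) 3 (-x)); [lra| simpl; lra]].
  simpl. lra.
- subst. rewrite exp_0. lra.
- assert (H1 := exp_taylor_lb 1 3 x ltac:(lra) ltac:(simpl; lra)).
  rewrite Rmult_1_l in H1. simpl in H1. lra.
Qed.
Lemma key2 S : 0 < S -> 1 - 299/1000*S <= (1+S)*exp(-S).
Proof.
intros HS.
assert (He := exp_pos (-S)).
destruct (Rle_lt_dec S 1).
{ pose proof (em_lb S (Rlt_le _ _ HS)).
  assert (0 <= 299/1000 - S/2 + S^2/3 - S^3/8 + S^4/30 - S^5/120) by (clear -r HS; nra).
  nra. }
destruct (Rle_lt_dec S (1000/299)); [|nra].
assert (E: exp (-S) = exp (-1) * exp(-1) * exp (2 - S)) by (rewrite <- !exp_plus; f_equal; ring).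
pose proof (T3_lb (2-S)). pose proof e1_lb. pose proof (exp_pos (2-S)).
assert (HP := Pall S ltac:(lra)). unfold P in HP.
assert (10609/78400 * (1 + (2-S) + (2-S)^2/2 + (2-S)^3/6) <= exp (-S)).
{ rewrite E. destruct (Rle_lt_dec 0 (1 + (2-S) + (2-S)^2/2 + (2-S)^3/6)).
  - assert (10609/78400 <= exp(-1)*exp(-1)) by nra. nra.
  - assert (0 < exp(-1)*exp(-1)) by nra. nra. }
nra.
Qed.
Lemma part2 x : Fr x <= exp (PI/12).
Proof.
unfold Fr. set (w := PI * sinh x).
set (T := exp w). assert (HT : 0 < T) by apply exp_pos.
set (S := ln (1 + T)).
assert (HS : 0 < S) by (unfold S; rewrite <- ln_1; apply ln_increasing; lra).
assert (E1 : exp (-w) = / T) by (unfold T; apply exp_Ropp).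
assert (E2 : exp (-S) = / (1+T)) by (unfold S; rewrite exp_Ropp, exp_ln; lra).
pose proof (key2 S HS).
assert (Hk : 1299/1000 <= exp (PI/12)).
{ pose proof PI_lb. pose proof (T3_lb (PI/12)). nra. }
rewrite E1.
replace (1 / (1 + / T)) with (1 - exp (-S)) by (rewrite E2; field; lra).
apply Rle_trans with (1299/1000); [|exact Hk].
apply (Rmult_le_reg_l S); [exact HS|].
replace (S * ((1 + S) / S * (1 - exp (- S)))) with ((1+S)*(1-exp(-S))) by (field; lra).
lra.
Qed.


Lemma Cmod_inv' (u : C) : Cmod (/ u) = / Cmod u.
Proof.
destruct (Req_dec (Cmod u) 0) as [e|e].
- rewrite e, Rinv_0. apply Cmod_eq_0 in e. subst. unfold Cinv. simpl.
  replace (0 / (0 * (0 * 1) + 0 * (0 * 1))) with 0 by (unfold Rdiv; ring). replace (- 0 / (0 * (0 * 1) + 0 * (0 * 1))) with 0 by (unfold Rdiv; ring). apply Cmod_0.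
- apply Cmod_inv. intros H. subst. apply e, Cmod_0.
Qed.

Lemma Csinh_xy x y : Csinh (x, y) = (sinh x * cos y, cosh x * sin y).
Proof.
unfold Csinh, Cexp. apply injective_projections; simpl; unfold sinh, cosh;
rewrite ?cos_neg, ?sin_neg; field.
Qed.

Lemma part1 d (hd0 : 0 < d) (hd1 : d < PI / 2) z : Rabs (Im z) <= d -> Cmod (Fc z) <= ct_d d.
Proof.
destruct z as [x y]. simpl. intros Hy.
assert (Hd : 0 < d < PI/2) by lra.
set (a := PI * (sinh x * cos y)). set (b := PI * (cosh x * sin y)).
destruct (Vbound d x y a b Hd Hy eq_refl eq_refl) as [Hr HV].
set (E := exp a) in *.
set (X := 1 + E * cos b) in *. set (Y := E * sin b) in *.
set (r := sqrt (X^2 + Y^2)) in *.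
unfold Fc. rewrite Csinh_xy.
assert (Hw : Cmult (RtoC PI) (sinh x * cos y, cosh x * sin y) = (a, b)).
{ apply injective_projections; simpl; unfold a, b; ring. }
rewrite Hw.
assert (HZ : Cplus (RtoC 1) (Cexp (a, b)) = (X, Y)).
{ unfold Cexp. apply injective_projections; simpl; unfold X, Y, E; ring. }
assert (HZ' : Cplus (RtoC 1) (Cexp (Copp (a, b))) = (1 + exp (-a) * cos b, - (exp (-a) * sin b))).
{ unfold Cexp. apply injective_projections; simpl; rewrite ?cos_neg, ?sin_neg; ring. }
rewrite HZ, HZ'.
unfold Cdiv. rewrite !Cmod_mult, !Cmod_inv', Cmod_1.
set (L := Clog (X, Y)).
set (rho := Cmod L).
assert (Hrho0 : 0 <= rho) by apply Cmod_ge_0.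
assert (H1L : Cmod (Cplus (RtoC 1) L) <= 1 + rho). { eapply Rle_trans; [apply Cmod_triangle|]. rewrite Cmod_1. fold rho. lra. }
assert (HE0 : 0 < E) by apply exp_pos.
assert (EF : E * exp (-a) = 1) by (unfold E; rewrite <- exp_plus; replace (a + -a) with 0 by ring; apply exp_0).
assert (Hsc : sin b ^ 2 + cos b ^ 2 = 1) by (pose proof (sin2_cos2 b); unfold Rsqr in H; lra).
assert (HR2 : X^2 + Y^2 = 1 + 2 * E * cos b + E^2).
{ unfold X, Y. transitivity (1 + 2*E*cos b + E^2*(sin b ^ 2 + cos b ^ 2)). ring. rewrite Hsc; ring. }
assert (Hrr : r^2 = X^2 + Y^2) by (unfold r; rewrite <- Rsqr_pow2; apply Rsqr_sqrt; apply Rplus_le_le_0_compat; apply pow2_ge_0).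
assert (Hr' : Cmod (1 + exp (- a) * cos b, - (exp (- a) * sin b)) = exp (-a) * r).
{ unfold Cmod; cbn [fst snd].
  replace ((1 + exp (- a) * cos b) ^ 2 + (- (exp (- a) * sin b)) ^ 2) with ((exp (-a) * r)^2).
  rewrite <- Rsqr_pow2. apply sqrt_Rsqr. apply Rmult_le_pos; [apply Rlt_le, exp_pos|lra].
  rewrite Rpow_mult_distr, Hrr, HR2.
  transitivity (exp(-a)^2 + 2*exp(-a)*cos b*(E*exp(-a)) + (E*exp(-a))^2). ring. rewrite EF.
  transitivity (1 + 2*exp(-a)*cos b + exp(-a)^2 * (sin b^2+cos b^2)); [rewrite Hsc; ring | ring]. }
rewrite Hr'.
assert (HEi : E = / exp (-a)).
{ apply (Rmult_eq_reg_r (exp (-a))); [|apply exp_neq_0]. rewrite EF, Rinv_l; [ring|apply exp_neq_0]. }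
assert (HV' : / (exp (-a) * r) = E / r).
{ rewrite HEi. field. split; first [apply exp_neq_0 | lra]. }
rewrite Rmult_1_l, HV'.
set (V := E / r) in *.
set (c := 1 + 1 / cos (PI / 2 * sin d)) in *.
assert (HV0 : 0 < V) by (unfold V; apply Rdiv_lt_0_compat; lra).
assert (Hsd : 0 < sin d) by (apply sin_gt_0; lra).
assert (Hsd1 : sin d < 1) by (rewrite <- sin_PI2; apply sin_increasing_1; lra).
assert (Hm : 0 < cos (PI / 2 * sin d)) by (apply cos_gt_0; pose proof PI_RGT_0; nra).
assert (Hc1 : 1 < c) by (unfold c; assert (0 < 1 / cos (PI / 2 * sin d)) by (apply Rdiv_lt_0_compat; lra); lra).
assert (Hlc : 0 < ln (1 + c)) by (rewrite <- ln_1; apply ln_increasing; lra).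
assert (Hct : ct_d d = c + c / ln (1 + c)) by (unfold ct_d, c_d; fold c; field; lra).
rewrite Hct.
assert (Hctp : 0 < c + c / ln (1 + c)) by (assert (0 < c / ln (1 + c)) by (apply Rdiv_lt_0_compat; lra); lra).
assert (Hrho : rho = sqrt (ln r ^ 2 + acos (X / r) ^ 2)).
{ unfold rho, L, Clog, Carg, Cmod. cbn [fst snd]. fold r.
  destruct (Rle_dec 0 Y); [reflexivity|]. f_equal. ring. }
assert (HXr : -1 <= X / r <= 1).
{ assert (X^2 <= r^2) by (rewrite Hrr; pose proof (pow2_ge_0 Y); lra).
  assert (-r <= X <= r) by (split; nra).
  split; [apply (Rmult_le_reg_r r); [lra|] | apply (Rmult_le_reg_r r); [lra|]];
  unfold Rdiv; rewrite Rmult_assoc, Rinv_l; lra. }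
assert (HL2 : ln (1 + V) <= rho).
{ rewrite Hrho. unfold V, E. apply L2 with X; [lra| apply acos_bound | apply cos_acos; exact HXr |].
  fold E. rewrite Hrr, HR2. unfold X. ring. }
assert (HlV : 0 < ln (1 + V)) by (rewrite <- ln_1; apply ln_increasing; lra).
destruct (Req_dec rho 0) as [e|e].
{ rewrite e, Rinv_0, Rmult_0_r, Rmult_0_l. lra. }
assert (Hrhop : 0 < rho) by lra.
apply Rle_trans with ((1 + rho) * / rho * V).
{ apply Rmult_le_compat_r; [lra|]. apply Rmult_le_compat_r; [apply Rlt_le, Rinv_0_lt_compat; lra|]. exact H1L. }
apply Rle_trans with (V + V / ln (1 + V)).
{ replace ((1 + rho) * / rho * V) with (V + V / rho) by (field; lra).
  apply Rplus_le_compat_l. unfold Rdiv. apply Rmult_le_compat_l; [lra|]. apply Rinv_le_contravar; lra. }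
apply mono. split; [exact HV0| exact HV].
Qed.

Theorem lemma12 (d : R) (hd0 : 0 < d) (hd1 : d < PI / 2) :
  (forall z : C, Rabs (Im z) <= d -> Cmod (Fc z) <= ct_d d) /\
  (forall x : R, Fr x <= exp (PI / 12)).
Proof.
split.
- intros z Hz. exact (part1 d hd0 hd1 z Hz).
- exact part2.
Qed.
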